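(* Let $k\geq1$, $n\geq2k$, let $\mathcal{S},\mathcal{T}$ be antichains in $\mathcal{F}=\mathcal{F}_{2k}^{[1,n]}$ with $\mathcal{T}\prec_p\mathcal{S}$, and let $i\geq1$. Then $$B(\mathcal{S},i)\setminus B(\mathcal{T},i)=\bigcup_{j\geq i}\Big(\big(B(\mathcal{S}([j,j+1]),j+2)\setminus B(\mathcal{T}([j,j+1]),j+2)\big)*\overline{[j,j+1]}\Big).$$
   Context: Notation: $[m,n]=\{m,\dots,n\}$; $d$-subsets of $[n]$ are identified with increasing vectors; $G\leq_p F$ means componentwise $\leq$ and $G\prec_p F$ means $G\leq_p F-\mathbf{1}_d$ ($\mathbf{1}_d$ the all-ones vector). For $r\geq1$, $\mathcal{F}_{2r}^{[m,n]}$ is the set of sets $\{i_1,i_1+1,\dots,i_r,i_r+1\}$ with $m\leq i_1$, $i_r\leq n-1$, $i_j\leq i_{j+1}-2$, ordered by $\leq_p$; $\mathcal{F}_0^{[m,n]}=\{\emptyset\}$. For antichains, $\mathcal{T}\prec_p\mathcal{S}$ means every $G\in\mathcal{T}$ satisfies $G\prec_p F$ for some $F\in\mathcal{S}$. $\mathcal{F}_{2r}(\mathcal{S})$ is the order ideal generated by $\mathcal{S}$. For $1\leq\ell\leq k$ and $J=[j,j+2\ell-1]$, $\mathcal{S}(J)\subseteq\mathcal{F}_{2(k-\ell)}^{[1,n]}$ is the set of maximal elements of $\{H\in\mathcal{F}_{2(k-\ell)}^{[1,n]}: H\subseteq[j+2\ell,n],\ J\cup H\in\mathcal{F}(\mathcal{S})\}$.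 $B(\mathcal{S},m)$ is the pure complex whose facets are the sets of $\mathcal{F}(\mathcal{S})\cap\mathcal{F}_{2k}^{[m,n]}$; $B(\mathcal{S}(J),m)$ is the pure complex whose facets are the sets of $\mathcal{F}_{2(k-\ell)}(\mathcal{S}(J))\cap\mathcal{F}_{2(k-\ell)}^{[m,n]}$. For pure complexes $X,Y$, $X\setminus Y$ is the complex generated by the facets of $X$ that are not facets of $Y$. $\overline{V}$ is the full simplex on $V$, $*$ is the join (join with the void complex is void). *)

(* Defs.v *)
From mathcomp Require Import all_boot.
From mathcomp Require Import finmap.
Set Implicit Arguments. Unset Strict Implicit. Unset Printing Implicit Defensive.
Local Open Scope fset_scope.

(* The void complex is the predicate that is everywhere false. *)
Definition face := {fset nat}.
Definition complex := face -> Prop.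

Definition itv (a b : nat) : face := [fset x in iota a (b.+1 - a)].

Definition vec (G : face) : seq nat := sort leq (G : seq nat).

(* G <=_p F : componentwise <= (same size) *)
Definition le_p (G F : face) : bool := all2 leq (vec G) (vec F).
(* G <_p F : G <=_p F - 1_d, i.e. g_t <= f_t - 1, i.e. g_t < f_t *)
Definition prec_p (G F : face) : bool := all2 (fun a b => a < b) (vec G) (vec F).

Definition Fam (r m n : nat) (H : face) : Prop :=
  exists ps : seq nat,
    [/\ size ps = r,
        sorted (fun a b => a.+2 <= b) ps,
        all (fun a => (m <= a) && (a.+1 <= n)) ps &
        H = \bigcup_(a <- ps) [fset a; a.+1]].

Definition antichain (k n : nat) (S : face -> Prop) : Prop :=
  (forall F, S F -> Fam k 1 n F) /\
  (forall F G, S F -> S G -> le_p F G -> F = G).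

Definition precA (T S : face -> Prop) : Prop :=
  forall G, T G -> exists F, S F /\ prec_p G F.

Definition Ideal (r n : nat) (S : face -> Prop) (G : face) : Prop :=
  Fam r 1 n G /\ exists F, S F /\ le_p G F.

(* S(J) for J = [j, j+2l-1]: maximal elements (w.r.t. <=_p) of
   { H in F_{2(k-l)}^{[1,n]} : H subset [j+2l, n], J cup H in F(S) } *)
Definition SJ (k n : nat) (S : face -> Prop) (l j : nat) (H : face) : Prop :=
  let P := fun H : face =>
    [/\ Fam (k - l) 1 n H, H `<=` itv (j + 2 * l) n
      & Ideal k n S (itv j (j + 2 * l - 1) `|` H)] in
  P H /\ forall H', P H' -> le_p H H' -> H' = H.

Definition gen (Fs : face -> Prop) : complex :=
  fun G => exists F, Fs F /\ G `<=` F.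

Definition facets (X : complex) (F : face) : Prop :=
  X F /\ forall G, X G -> F `<=` G -> G = F.

Definition cdiff (X Y : complex) : complex :=
  gen (fun F => facets X F /\ ~ facets Y F).

(* join of complexes (void if one of them is void) *)
Definition join (X Y : complex) : complex :=
  fun G => exists A B, [/\ X A, Y B & G = A `|` B].

Definition simplex (V : face) : complex := fun G => G `<=` V.

Definition Bc (r n : nat) (S : face -> Prop) (m : nat) : complex :=
  gen (fun F => Ideal r n S F /\ Fam r m n F).

(* Main.v *)
Require Import Defs.
From mathcomp Require Import all_boot.
From mathcomp Require Import finmap.
From mathcomp Require Import zify.
From Stdlib Require Import Classical.
Local Open Scope fset_scope.

Definition U (ps : seq nat) : face := \bigcup_(a <- ps) [fset a; a.+1].

Lemma U_cons a ps : U (a :: ps) = [fset a; a.+1] `|` U ps.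
Proof. by rewrite /U big_cons. Qed.

Lemma memU x ps : (x \in U ps) = has (fun a => (x == a) || (x == a.+1)) ps.
Proof.
elim: ps => [|a ps IH]; first by rewrite /U big_nil inE.
by rewrite U_cons in_fsetU in_fset2 IH.
Qed.

Lemma in_itv x a b : (x \in itv a b) = (a <= x <= b).
Proof.
rewrite /itv inE mem_iota; apply/idP/idP => /andP[h1 h2]; apply/andP; split; lia.
Qed.

Lemma mem_vec X x : (x \in vec X) = (x \in X).
Proof. by rewrite /vec mem_sort. Qed.

Lemma vec_eq (X : face) s : sorted leq s -> uniq s -> X =i s -> vec X = s.
Proof.
rewrite /vec => ss us eqX. rewrite -(sorted_sort leq_trans ss).
apply/perm_sortP; [exact: leq_total|exact: leq_trans|exact: anti_leq|].
by apply: uniq_perm => //; exact: fset_uniq.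
Qed.

Lemma vec_sorted X : sorted leq (vec X).
Proof. exact: sort_sorted leq_total _. Qed.

Lemma vec_uniq X : uniq (vec X).
Proof. by rewrite /vec sort_uniq fset_uniq. Qed.

Lemma vec_cat (A B : face) : (forall a b, a \in A -> b \in B -> a < b) ->
  vec (A `|` B) = vec A ++ vec B.
Proof.
move=> lt; apply: vec_eq.
- rewrite (sorted_pairwise leq_trans) pairwise_cat; apply/and3P; split;
    try by rewrite -(sorted_pairwise leq_trans) vec_sorted.
  apply/allrelP => a b; rewrite !mem_vec => ha hb.
  exact: ltnW (lt _ _ ha hb).
- rewrite cat_uniq !vec_uniq /= andbT; apply/hasPn => b; rewrite !mem_vec => hb.
  apply/negP => ha; have := lt _ _ ha hb; by rewrite ltnn.
- by move=> x; rewrite mem_cat !mem_vec in_fsetU.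
Qed.

Lemma vec2 a : vec [fset a; a.+1] = [:: a; a.+1].
Proof.
apply: vec_eq; first by rewrite /= leqnSn.
  by rewrite /= inE andbT; apply/negP => /eqP; lia.
by move=> x; rewrite in_fset2 !inE.
Qed.

Definition srel := fun a b : nat => a.+2 <= b.
Lemma srel_trans : transitive srel.
Proof. move=> y x z; rewrite /srel; lia. Qed.

Lemma vecU a ps : path (fun a b => a.+2 <= b) a ps ->
  vec (U (a :: ps)) = a :: a.+1 :: vec (U ps).
Proof.
move=> p; rewrite U_cons vec_cat ?vec2 //.
move=> x y; rewrite in_fset2 memU => hx /hasP[b hb hy].
have := allP (order_path_min srel_trans p) b hb; rewrite /srel.
move: hx hy => /orP[] /eqP -> /orP[] /eqP ->; lia.
Qed.

Lemma size_vecU ps : sorted (fun a b => a.+2 <= b) ps -> size (vec (U ps)) = 2 * size ps.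
Proof.
elim: ps => [|a ps IH] /=.
  by move=> _; rewrite /U big_nil /vec.
move=> p; rewrite vecU //= IH ?(path_sorted p) //; lia.
Qed.

Lemma card_vec (A : face) : #|` A| = size (vec A).
Proof. by rewrite /vec size_sort. Qed.

Lemma Fam_bounds r m n F x : Fam r m n F -> x \in F -> m <= x <= n.
Proof.
move=> [ps [_ _ /allP al ->]]; rewrite memU => /hasP[a ha /orP[]/eqP->];
have := al a ha => /andP[h1 h2]; apply/andP; split; lia.
Qed.

Lemma Fam_card r m n F : Fam r m n F -> #|` F| = 2 * r.
Proof. by move=> [ps [<- s _ ->]]; rewrite card_vec size_vecU. Qed.

Lemma Fam_weaken r m m' n F : Fam r m n F -> m' <= m -> Fam r m' n F.
Proof.
move=> [ps [s so /allP al e]] le; exists ps; split => //.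
apply/allP => a /al /andP[h1 h2]; apply/andP; split; lia.
Qed.

Lemma Fam_join k m n j H : Fam (k - 1) (j + 2) n H -> m <= j -> j.+1 <= n -> 1 <= k ->
  Fam k m n ([fset j; j.+1] `|` H).
Proof.
move=> [ps [s so al ->]] mj jn k1; exists (j :: ps); split.
- by rewrite /= s; lia.
- rewrite /= path_min_sorted //; apply/allP => a /(allP al) /andP[h1 _]; rewrite addn2 in h1; exact: h1.
- rewrite /= mj jn /=; apply/allP => a /(allP al) /andP[h1 h2]; apply/andP; split; lia.
- by rewrite /U big_cons.
Qed.

Lemma Fam_split k m n F : Fam k m n F -> 1 <= k ->
  exists j H, [/\ m <= j, F = [fset j; j.+1] `|` H & Fam (k - 1) (j + 2) n H].
Proof.
move=> [[|j ps] [s so al ->]] k1; first by move: s k1 => /= <-.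
exists j, (U ps); split.
- by move: al => /= /andP[/andP[]].
- by rewrite /U big_cons.
- exists ps; split => //.
  + by move: s => /= <-; lia.
  + exact: path_sorted so.
  + apply/allP => a ha; have := allP (order_path_min srel_trans so) a ha.
    move: al => /= /andP[_ /allP al]; have := al a ha; rewrite /srel => /andP[_ ->]; lia.
Qed.
Arguments Fam_bounds {r m n F x}.
Arguments Fam_weaken {r m m' n F}.
Arguments Fam_join {k m n j H}.
Arguments Fam_split {k m n F}.
Arguments Fam_card {r m n F}.

Lemma vec_inj A B : vec A = vec B -> A = B.
Proof. by move=> e; apply/fsetP => x; rewrite -!mem_vec e. Qed.

Lemma all2_trans s t u : all2 leq s t -> all2 leq t u -> all2 leq s u.
Proof.
elim: s t u => [|x s IH] [|y t] [|z u] //= /andP[h1 h2] /andP[h3 h4].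
by rewrite (leq_trans h1 h3) (IH _ _ h2 h4).
Qed.

Lemma all2_sumn s t : all2 leq s t -> sumn s <= sumn t.
Proof.
elim: s t => [|x s IH] [|y t] //= /andP[h1 h2]; exact: leq_add h1 (IH _ h2).
Qed.

Lemma all2_sumn_eq s t : all2 leq s t -> sumn t <= sumn s -> s = t.
Proof.
elim: s t => [|x s IH] [|y t] //= /andP[h1 h2] h.
have h3 := all2_sumn _ _ h2.
have exy : x = y by lia.
subst y; congr (_ :: _); apply: IH => //; lia.
Qed.

Lemma all2_size s t : all2 leq s t -> size s = size t.
Proof. by rewrite all2E => /andP[/eqP]. Qed.

Lemma le_p_trans A B C : le_p A B -> le_p B C -> le_p A C.
Proof. exact: all2_trans. Qed.

Lemma le_p_refl A : le_p A A.
Proof. by rewrite /le_p; elim: (vec A) => //= x s ->; rewrite leqnn. Qed.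

Lemma sumn_bound n0 s : (forall x, x \in s -> x <= n0) -> sumn s <= n0 * size s.
Proof.
elim: s => [|x s IH] //= h; rewrite mulnS; apply: leq_add.
  by apply: h; rewrite inE eqxx.
by apply: IH => y hy; apply: h; rewrite inE hy orbT.
Qed.

Lemma exists_max (P : face -> Prop) n0 H :
  (forall H x, P H -> x \in H -> x <= n0) -> P H ->
  exists H', [/\ P H', le_p H H' & forall H'', P H'' -> le_p H' H'' -> H'' = H'].
Proof.
move=> bnd.
pose mu (X : face) := n0 * size (vec X) - sumn (vec X).
suff: forall m H, P H -> mu H <= m ->
  exists H', [/\ P H', le_p H H' & forall H'', P H'' -> le_p H' H'' -> H'' = H'].
  by move=> /(_ (mu H) H) h PH; apply: h.
elim=> [|m IH] X PX hm;
  (case: (classic (forall H'', P H'' -> le_p X H'' -> H'' = X)) => hmax;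
   [by exists X; split => //; exact: le_p_refl|]);
  (have [Y hY] : exists Y, ~ (P Y -> le_p X Y -> Y = X)
    by apply: not_all_ex_not);
  (have [PY [lXY nY]] : P Y /\ le_p X Y /\ Y <> X by tauto);
  (have lt : sumn (vec X) < sumn (vec Y) by
     rewrite ltnNge; apply/negP => h; apply: nY; apply: vec_inj; symmetry;
     exact: (all2_sumn_eq _ _ lXY h));
  (have bY : sumn (vec Y) <= n0 * size (vec Y) by
     apply: sumn_bound => x; rewrite mem_vec; exact: bnd);
  have sz := all2_size _ _ lXY.
- rewrite /mu in hm; lia.
- have [Z [PZ lYZ mZ]] : exists H', [/\ P H', le_p Y H' &
     forall H'', P H'' -> le_p H' H'' -> H'' = H'].
    apply: IH => //; rewrite /mu in hm *; lia.
  exists Z; split => //; exact: le_p_trans lXY lYZ.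
Qed.

Lemma facets_gen (Fs : face -> Prop) c F : (forall F, Fs F -> #|` F| = c) ->
  facets (gen Fs) F <-> Fs F.
Proof.
move=> hc; split.
- move=> [[F' [HF' sub]] mx].
  have e : F' = F by apply: mx => //; exists F'; split.
  by rewrite -e.
- move=> HF; split; first by exists F; split.
  move=> G [F'' [HF'' sub]] FG.
  have e : F == F''.
    rewrite eqEfcard (hc _ HF) (hc _ HF'') leqnn andbT.
    exact: fsubset_trans FG sub.
  move/eqP: e => e; subst F''.
  by apply/eqP; rewrite eqEfsubset sub FG.
Qed.

Lemma facetsBc r n R m F : facets (Bc r n R m) F <-> Ideal r n R F /\ Fam r m n F.
Proof.
apply: (facets_gen _ (2 * r)) => F' [_ hF]; exact: Fam_card hF.
Qed.

Lemma itvJ j : itv j (j + 2 * 1 - 1) = [fset j; j.+1].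
Proof.
apply/fsetP => x; rewrite in_itv in_fset2; apply/idP/idP.
  move=> /andP[h1 h2]; apply/orP; have : x = j \/ x = j.+1 by lia.
  by case=> ->; rewrite eqxx ?orbT; [left|right].
by move=> /orP[]/eqP->; apply/andP; split; lia.
Qed.

Lemma itvJ' j : itv j (j + 1) = [fset j; j.+1].
Proof. by rewrite -itvJ; congr itv; lia. Qed.

Lemma key k n (R : face -> Prop) j H : 1 <= k -> Fam (k - 1) (j + 2) n H ->
  (Ideal k n R ([fset j; j.+1] `|` H) <-> Ideal (k - 1) n (SJ k n R 1 j) H).
Proof.
move=> k1 FH; split.
- move=> IdR.
  have sub : H `<=` itv (j + 2 * 1) n.
    apply/fsubsetP => x hx; rewrite in_itv; have := Fam_bounds FH hx; lia.
  have FH1 : Fam (k - 1) 1 n H by apply: Fam_weaken FH _; lia.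
  have [H' [[F1 S1 I1] lHH' mx]] := exists_max
    (fun H => [/\ Fam (k - 1) 1 n H, H `<=` itv (j + 2 * 1) n
      & Ideal k n R (itv j (j + 2 * 1 - 1) `|` H)]) n H
    ltac:(move=> X x [_ /fsubsetP s _] /s; rewrite in_itv => /andP[]//)
    ltac:(by split => //; rewrite itvJ).
  split => //; exists H'; split => //; split => //.
- move=> [_ [H' [[[FH' subH' IdH'] _] lHH']]].
  move: IdH'; rewrite itvJ => -[FJH' [F [RF lF]]].
  have bj : 1 <= j <= n.
    by apply: Fam_bounds FJH' _; rewrite in_fsetU fset21.
  have bj1 : 1 <= j.+1 <= n.
    by apply: Fam_bounds FJH' _; rewrite in_fsetU fset22.
  split.
    by apply: Fam_join FH _ _ k1; lia.
  exists F; split => //; apply: le_p_trans lF.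
  have e1 : vec ([fset j; j.+1] `|` H) = [:: j; j.+1] ++ vec H.
    rewrite vec_cat ?vec2 // => a b; rewrite in_fset2 => ha /(Fam_bounds FH).
    by move: ha => /orP[]/eqP->; lia.
  have e2 : vec ([fset j; j.+1] `|` H') = [:: j; j.+1] ++ vec H'.
    rewrite vec_cat ?vec2 // => a b; rewrite in_fset2 => ha /(fsubsetP subH'); rewrite in_itv.
    by move: ha => /orP[]/eqP->; lia.
  by rewrite /le_p e1 e2 /= !leqnn.
Qed.

Theorem corollary3p7 (k n : nat) (S T : face -> Prop) (i : nat) :
  1 <= k -> 2 * k <= n ->
  antichain k n S -> antichain k n T -> precA T S -> 1 <= i ->
  forall G : face,
    cdiff (Bc k n S i) (Bc k n T i) G <->
    exists j, i <= j /\
      join (cdiff (Bc (k - 1) n (SJ k n S 1 j) (j + 2))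
                  (Bc (k - 1) n (SJ k n T 1 j) (j + 2)))
           (simplex (itv j (j + 1))) G.
Proof.
move=> k1 _ _ _ _ _ G; split.
- move=> [F [[/facetsBc [IdS FamF] nfT] GF]].
  have [j [H [ij eF FH]]] := Fam_split FamF k1.
  exists j; split => //.
  exists (G `&` H), (G `&` [fset j; j.+1]); split.
  + exists H; split; last exact: fsubsetIr.
    split.
      apply/facetsBc; split => //; apply/(key _ _ _ _ _ k1 FH); by rewrite -eF.
    move/facetsBc => [IdT _]; apply: nfT; apply/facetsBc; split => //.
    by rewrite eF; apply/(key _ _ _ _ _ k1 FH).
  + by rewrite /simplex itvJ'; exact: fsubsetIr.
  + by rewrite -fsetIUr fsetUC -eF; apply/esym/fsetIidPl.
- move=> [j [ij [A [B [[H [[/facetsBc [IdS FH] nfT] AH]] BJ ->]]]]].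
  have IdS' := proj2 (key _ _ _ _ _ k1 FH) IdS.
  have bj1 : 1 <= j.+1 <= n.
    by case: IdS' => FF _; apply: Fam_bounds FF _; rewrite in_fsetU fset22.
  exists ([fset j; j.+1] `|` H); split; last first.
    rewrite fsetUC; apply: fsetUSS => //; by move: BJ; rewrite /simplex itvJ'.
  split.
    by apply/facetsBc; split => //; apply: Fam_join FH ij _ k1; lia.
  move/facetsBc => [IdT _]; apply: nfT; apply/facetsBc; split => //.
  exact: (proj1 (key _ _ _ _ _ k1 FH) IdT).
Qed.
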